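(* Let $T$ be a finite rooted unweighted tree with root $r_T$ and height $h_T$, and consider the Hydra game on $T$ played by $\mathrm{HERC}$. Define the potential $\Phi = 4\, h_T\, H(\mathrm{rank}(r_T)) + \sum_{w \in T} \eta(w)\,\mathrm{level}(w)$. Fix any step in which the adversary kills an alive node $u$ (with the game not yet ended before the step) and, as a result, $\mathrm{HERC}$ changes its distribution from $\eta$ to $\eta'$. Let $\Delta\mathrm{HERC} = \sum_{w \neq u} (\eta'(w)-\eta(w))\,\mathrm{dist}(u,w)$ be the cost incurred by $\mathrm{HERC}$ in this step and let $\Delta\Phi$ be the resulting change of $\Phi$. Then $\Delta\Phi \le -\Delta\mathrm{HERC}$.
   Context: Hydra game: it is played on a fixed finite rooted unweighted tree $T$ known in advance. Each node is asleep, alive, or dead. Initially the root $r_T$ is alive and all other nodes are asleep. In each step the adversary picks an alive node $w$, makes it dead, and makes all its children alive. The game ends when all nodes except one are dead. $\mathrm{dist}(u,w)$ is the length of the shortest path between $u$ and $w$ in $T$. $\mathrm{rank}(u)$ is the number of non-dead leaves in the subtree rooted at $u$ (at the current time); $\mathrm{level}(u)$ is the height of the subtree rooted at $u$ (leaves have level $0$, $h_T=\mathrm{level}(r_T)$). $H(n)=\sum_{i=1}^n 1/i$. Algorithm $\mathrm{HERC}$ maintains the probability distribution $\eta$ with $\eta(u)=\mathrm{rank}(u)/\mathrm{rank}(r_T)$ for alive $u$ and $\eta(u)=0$ otherwise. When $u$ is killed, the new distribution $\eta'$ has $\eta'(u)=0$ and: if $u$ is not a leaf, $\eta'(w)=(\mathrm{rank}(w)/\mathrm{rank}(u))\,\eta(u)$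 for each child $w$ of $u$ and $\eta'=\eta$ elsewhere; if $u$ is a leaf, $\eta'(w)=\eta(w)/(1-\eta(u))$ for all $w\neq u$. Moving probability mass $p$ from node $u$ to node $w$ is charged cost $p\cdot\mathrm{dist}(u,w)$. *)

(* Defs.v *)
From mathcomp Require Import all_boot all_order all_algebra.
Set Implicit Arguments. Unset Strict Implicit. Unset Printing Implicit Defensive.
Import Order.TTheory GRing.Theory Num.Theory.

(* A finite rooted tree on the finite node type T, given by its root r and a
   parent function: parent r = r, and every node reaches r by iterating parent
   (this forces acyclicity). The edges are {v, parent v} for v <> r. *)
Definition is_rooted_tree (T : finType) (r : T) (parent : T -> T) : Prop :=
  parent r = r /\ forall v : T, exists k : nat, iter k parent v = r.

Section Tree.
Variables (T : finType) (r : T) (parent : T -> T).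

Definition is_child (u w : T) : bool := (w != r) && (parent w == u).

Definition is_leaf (u : T) : bool := [forall w, ~~ is_child u w].

Definition desc (u w : T) : bool := [exists k : 'I_#|T|, iter k parent w == u].

Definition adj : rel T := fun x y => is_child y x || is_child x y.

(* dist u w : length of a shortest path from u to w in the tree
   (every simple path has length < #|T|) *)
Definition dist (u w : T) : nat :=
  \big[minn/#|T|]_(n < #|T| |
       [exists p : n.-tuple T, path adj u p && (last u p == w)]) (n : nat).

Definition level (u : T) : nat := \max_(w | desc u w) dist u w.

Definition height : nat := level r.

Inductive status := Asleep | Alive | Dead.
Definition is_alive (x : status) : bool := if x is Alive then true else false.
Definition is_dead (x : status) : bool := if x is Dead then true else false.

Definition state := T -> status.

Definition init_state : state := fun w => if w == r then Alive else Asleep.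

Definition kill (s : state) (u : T) : state :=
  fun w => if w == u then Dead else if is_child u w then Alive else s w.

Definition game_ended (s : state) : bool := #|[set w | ~~ is_dead (s w)]| == 1%N.

Inductive reachable : state -> Prop :=
| reach_init : reachable init_state
| reach_step s u : reachable s -> ~~ game_ended s -> is_alive (s u) ->
    reachable (kill s u).

Definition rank (s : state) (u : T) : nat :=
  #|[set w | is_leaf w && desc u w && ~~ is_dead (s w)]|.

Local Open Scope ring_scope.
Variable R : realFieldType.

Definition harmonic (n : nat) : R := \sum_(i < n) (i.+1%:R)^-1.

Definition eta (s : state) (w : T) : R :=
  if is_alive (s w) then (rank s w)%:R / (rank s r)%:R else 0.

Definition herc_update (s : state) (u : T) (w : T) : R :=
  if w == u then 0
  else if ~~ is_leaf u then
         (if is_child u w then ((rank s w)%:R / (rank s u)%:R) * eta s u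
          else eta s w)
       else eta s w / (1 - eta s u).

Definition herc_cost (s : state) (u : T) : R :=
  \sum_(w | w != u) (herc_update s u w - eta s w) * (dist u w)%:R.

(* potential Phi = 4 h_T H(rank(r_T)) + sum_w et(w) level(w),
   evaluated for a game state s (giving rank r_T) and a distribution et *)
Definition potential (s : state) (et : T -> R) : R :=
  4%:R * (height%:R) * harmonic (rank s r) + \sum_w et w * (level w)%:R.

End Tree.

(* Main.v *)
Require Import Defs.
From mathcomp Require Import all_boot all_order all_algebra.
From mathcomp Require Import zify ring lra.
Import Order.TTheory GRing.Theory Num.Theory.

Lemma fin_leaf (R : realFieldType) (h H q a l X : R) : (X <= 4%:R * h * a)%R ->
  (h * a <= h * q)%R -> (0 <= a * l)%R ->
  (4%:R * h * H - (4%:R * h * H + 4%:R * h * q) - a * l + X <= 0)%R.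
Proof. move=> *; lra. Qed.

Section Basics.
Variables (T : finType) (r : T) (parent : T -> T).
Hypothesis Hpr : parent r = r.
Hypothesis Hex : forall v : T, exists k : nat, iter k parent v = r.

Lemma iter_r n : iter n parent r = r.
Proof. by elim: n => //= n ->. Qed.

Lemma iter_ge k i x : i <= k -> iter i parent x = r -> iter k parent x = r.
Proof. by move=> hik h; rewrite -(subnK hik) iterD h iter_r. Qed.

Lemma cycle_r m y : iter m.+1 parent y = y -> y = r.
Proof.
move=> h; have [k hk] := Hex y.
have hm : forall t, iter (m.+1 * t) parent y = y.
  elim=> [|t IH]; first by rewrite muln0.
  by rewrite mulnS iterD IH h.
rewrite -(hm k); apply: (@iter_ge _ k) => //.
by rewrite leq_pmull.
Qed.

Lemma min_iter_lt k x v : iter k parent x = v ->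
  (forall j, j < k -> iter j parent x != v) -> k < #|T|.
Proof.
move=> hk hmin.
have inj : injective (fun i : 'I_k.+1 => iter i parent x).
  move=> i j hij.
  suff gen : forall a b : 'I_k.+1, a < b -> iter a parent x = iter b parent x -> False.
    apply/val_inj/eqP; case: (ltngtP i j) => // h.
      by case: (gen _ _ h hij).
    by case: (gen _ _ h (esym hij)).
  move=> a b hab e.
  have hb : b <= k by rewrite -ltnS.
  have := hmin (k - b + a).
  have -> : k - b + a < k.
    by rewrite -ltn_subRL subKn.
  move=> /(_ isT); rewrite iterD e -iterD subnK //.
  by rewrite hk eqxx.
by have := leq_card _ inj; rewrite card_ord.
Qed.

Lemma desc_intro v x k : iter k parent x = v -> desc parent v x.
Proof.
move=> hk.
have exP : exists n, iter n parent x == v by exists k; apply/eqP.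
case: (ex_minnP exP) => m /eqP hm hmin.
have hlt : m < #|T|.
  apply: (@min_iter_lt m x v hm) => j hj; apply/negP => /hmin.
  by rewrite leqNgt hj.
by apply/existsP; exists (Ordinal hlt); rewrite /= hm.
Qed.

Lemma descP {v x} : desc parent v x -> exists2 k, k < #|T| & iter k parent x = v.
Proof. by case/existsP => k /eqP hk; exists k. Qed.

Lemma desc_r x : desc parent r x.
Proof. by have [k hk] := Hex x; exact: desc_intro hk. Qed.

Lemma bigmin_seq (I : eqType) (s : seq I) (P : pred I) (F : I -> nat) d j :
  j \in s -> P j -> \big[minn/d]_(i <- s | P i) F i <= F j.
Proof.
elim: s => //= a s IH; rewrite inE big_cons => /orP [/eqP <-|hj] hP.
  by rewrite hP geq_minl.
case: (P a); last exact: IH.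
by rewrite geq_min IH // orbT.
Qed.

Lemma adj_sym : symmetric (adj r parent).
Proof. by move=> x y; rewrite /adj orbC. Qed.

Lemma dist_le {u w} (p : seq T) : path (adj r parent) u p -> last u p = w ->
  size p < #|T| -> dist r parent u w <= size p.
Proof.
move=> hp hl hs; rewrite /dist.
have := @bigmin_seq _ (index_enum 'I_#|T|) (fun n : 'I_#|T| =>
       [exists p : n.-tuple T, path (adj r parent) u p && (last u p == w)])
       (fun n => n : nat) #|T| (Ordinal hs) (mem_index_enum _).
apply.
apply/existsP; exists (in_tuple p) => /=; by rewrite hp hl eqxx.
Qed.

Lemma dist_leT u w : dist r parent u w <= #|T|.
Proof.
rewrite /dist; elim/big_ind: _ => //.
  by move=> a b ha hb; rewrite geq_min ha.
by move=> i _; apply: ltnW.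
Qed.

Lemma dist_wit u w : dist r parent u w < #|T| ->
  exists p : seq T, [/\ path (adj r parent) u p, last u p = w & size p = dist r parent u w].
Proof.
rewrite /dist; elim/big_ind: _.
- by rewrite ltnn.
- move=> a b ha hb; rewrite /minn; case: (a < b) => h.
    exact: ha.
  exact: hb.
move=> i /existsP [p /andP [hp /eqP hl]] _.
by exists p; rewrite size_tuple.
Qed.

Lemma dist_sym u w : dist r parent u w <= dist r parent w u.
Proof.
case: (ltnP (dist r parent w u) #|T|) => h; last first.
  exact: leq_trans (dist_leT _ _) h.
have [p [hp hl hs]] := dist_wit _ _ h.
rewrite -hs.
have hp' : path (adj r parent) (last w p) (rev (belast w p)).
  rewrite rev_path; apply: sub_path hp => x y; by rewrite adj_sym.
rewrite hl in hp'.
have := dist_le _ hp'; rewrite size_rev size_belast; apply => //.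
  case: p hp hl hs {hp'} => [|a p] /= _ hl _; first by [].
  by rewrite rev_cons last_rcons.
by rewrite hs.
Qed.

Lemma dist_symE u w : dist r parent u w = dist r parent w u.
Proof. by apply/eqP; rewrite eqn_leq !dist_sym. Qed.

Lemma dist_tri a b c : dist r parent a c <= dist r parent a b + dist r parent b c.
Proof.
case: (ltnP (dist r parent a b + dist r parent b c) #|T|) => h; last first.
  exact: leq_trans (dist_leT _ _) h.
have h1 : dist r parent a b < #|T| by apply: leq_ltn_trans h; apply: leq_addr.
have h2 : dist r parent b c < #|T| by apply: leq_ltn_trans h; apply: leq_addl.
have [p [hp hl hs]] := dist_wit _ _ h1.
have [q [hq hlq hsq]] := dist_wit _ _ h2.
have := @dist_le a c (p ++ q); rewrite size_cat hs hsq; apply => //.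
  by rewrite cat_path hp hl hq.
by rewrite last_cat hl.
Qed.


Lemma exr y : exists n, iter n parent y == r.
Proof. by have [k hk] := Hex y; exists k; apply/eqP. Qed.

Definition depth y := ex_minn (exr y).

Lemma depth_iter y : iter (depth y) parent y = r.
Proof. by rewrite /depth; case: ex_minnP => m /eqP. Qed.

Lemma depth_min y k : iter k parent y = r -> depth y <= k.
Proof. by rewrite /depth; case: ex_minnP => m _ h /eqP /h. Qed.

Lemma depth_parent {y} : y != r -> depth y = (depth (parent y)).+1.
Proof.
move=> hy; apply/eqP; rewrite eqn_leq; apply/andP; split.
  by apply: depth_min; rewrite iterSr depth_iter.
have := depth_iter y; case e: (depth y) => [|d].
  by move=> h; rewrite -h eqxx in hy.
by rewrite iterSr => h; apply: depth_min.
Qed.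

Lemma adj_depth {y z} : adj r parent y z -> depth z <= (depth y).+1.
Proof.
rewrite /adj /is_child => /orP [/andP [hy /eqP hp]|/andP [hz /eqP hp]].
  by rewrite (depth_parent hy) hp leqW.
by rewrite (depth_parent hz) hp.
Qed.

Lemma path_depth a p : path (adj r parent) a p -> depth (last a p) <= depth a + size p.
Proof.
elim: p a => [|b p IH] a /=; first by rewrite addn0.
move=> /andP [hab hp]; apply: leq_trans (IH _ hp) _.
by rewrite addnS -addSn leq_add2r adj_depth.
Qed.

Lemma depth_lt y : depth y < #|T|.
Proof.
apply: (@min_iter_lt _ y r (depth_iter y)) => j hj; apply/negP => /eqP /depth_min.
by rewrite leqNgt hj.
Qed.

Lemma dist_depth a b : depth b <= depth a + dist r parent a b.
Proof.
case: (ltnP (dist r parent a b) #|T|) => h.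
  have [p [hp hl hs]] := dist_wit _ _ h.
  by rewrite -hs -hl path_depth.
apply: leq_trans (ltnW (depth_lt b)) _; apply: leq_trans h _; exact: leq_addl.
Qed.

Lemma iter_ne_r {k x w} : iter k parent x = w -> w != r -> forall i, i <= k -> iter i parent x != r.
Proof.
move=> hk hw i hi; apply/negP => /eqP h.
by move: hw; rewrite -hk (iter_ge _ _ _ hi h) eqxx.
Qed.

Lemma chain_path k x : (forall i, i < k -> iter i parent x != r) ->
  path (adj r parent) x (traject parent (parent x) k).
Proof.
elim: k x => [|k IH] x h //=.
rewrite IH ?andbT.
  by rewrite /adj /is_child (h 0) // eqxx ?orbT.
by move=> i hi; rewrite -iterSr h.
Qed.

Lemma dist_chain {k x w} : iter k parent x = w -> w != r -> k < #|T| ->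
  dist r parent w x <= k.
Proof.
move=> hk hw hlt; rewrite dist_symE.
have := @dist_le x w (traject parent (parent x) k).
rewrite size_traject; apply => //.
  apply: chain_path => i hi; apply: (iter_ne_r hk hw); exact: ltnW.
by rewrite last_traject.
Qed.

Lemma depth_chain {k x w} : iter k parent x = w -> w != r -> depth x = depth w + k.
Proof.
elim: k x => [|k IH] x hk hw; first by rewrite addn0 -hk.
have hx : x != r by apply: (iter_ne_r hk hw 0).
rewrite (depth_parent hx) (IH (parent x)) ?addnS //.
by rewrite -iterSr.
Qed.

Lemma child_neq {u w} : is_child r parent u w -> w != u.
Proof.
rewrite /is_child => /andP [hw /eqP hp]; apply/negP => /eqP e.
move: hw; rewrite e; move: hp; rewrite e => hp.
by rewrite (@cycle_r 0 u) ?eqxx //= hp.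
Qed.

Lemma level_child {u w} : is_child r parent u w -> (level r parent w).+1 <= level r parent u.
Proof.
move=> hc; have := hc; rewrite /is_child => /andP [hw /eqP hp].
have [x hx] : exists x, desc parent w x && (level r parent w == dist r parent w x).
  rewrite /level; elim/big_ind: _.
  - exists w; apply/andP; split; first exact: (@desc_intro _ _ 0).
    have hT : 0 < #|T| by apply/card_gt0P; exists w.
    by rewrite eq_sym -leqn0; apply: (@dist_le w w [::]).
  - move=> a b [xa /andP [h1 /eqP e1]] [xb /andP [h2 /eqP e2]].
    rewrite /maxn; case: (a < b).
      by exists xb; rewrite h2 e2 eqxx.
    by exists xa; rewrite h1 e1 eqxx.
  by move=> x hx; exists x; rewrite hx eqxx.
case/andP: hx => hd /eqP ->.
have [k hk hkx] := descP hd.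
have h1 := dist_chain hkx hw hk.
have h2 := depth_chain hkx hw.
have h3 : depth w = (depth u).+1 by rewrite (depth_parent hw) hp.
have h4 := dist_depth u x.
have hdu : desc parent u x by apply: (@desc_intro _ _ k.+1); rewrite iterS hkx.
have h5 : dist r parent u x <= level r parent u by apply: leq_bigmax_cond.
apply: leq_trans h5; apply: leq_trans (_ : k.+1 <= _); first by [].
by move: h4; rewrite h2 h3 addSn -addnS leq_add2l.
Qed.

Lemma dist_r_le y : dist r parent r y <= height r parent.
Proof. by apply: leq_bigmax_cond; apply: desc_r. Qed.

Lemma dist_le2h a b : dist r parent a b <= (height r parent).*2.
Proof.
apply: leq_trans (dist_tri a r b) _.
by rewrite -addnn leq_add // ?dist_r_le // dist_symE dist_r_le.
Qed.

Lemma level_le2h a : level r parent a <= (height r parent).*2.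
Proof. by apply/bigmax_leqP => x _; apply: dist_le2h. Qed.
Definition INV (s : state T) := forall v x k, is_alive (s v) -> x != v ->
  iter k parent x = v -> s x = Asleep.

Lemma reach_INV s : reachable r parent s -> INV s.
Proof.
elim=> [|s0 u hr IH hne hu].
  move=> v x k; rewrite /init_state; case: (v =P r) => [->|] //= _.
  by move=> /negbTE ->.
move=> v x k; rewrite /kill.
case: (v =P u) => // /eqP hvu.
case hcv: (is_child r parent u v) => /= hav hxv hk.
-
  have /andP [hvr /eqP hpv] := hcv.
  have hxu : x != u.
    apply/negP => /eqP exu.
    have : iter k.+1 parent u = u by rewrite iterS -exu hk hpv.
    move/cycle_r => eu.
    by move: hvr; rewrite -hk exu eu iter_r ?eqxx.
  have hsx : s0 x = Asleep by apply: (IH u x k.+1) => //; rewrite iterS hk hpv.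
  rewrite (negbTE hxu).
  case hcx: (is_child r parent u x); last by rewrite /= hsx.
  have /andP [hxr /eqP hpx] := hcx.
  case: k hk hxv => [|k] hk hxv; first by move: hxv; rewrite -hk eqxx.
  move: hk; rewrite iterSr hpx => hk.
  have : iter k.+1 parent v = v by rewrite iterSr hpv hk.
  by move/cycle_r => ev; rewrite ev eqxx in hvr.
- have hsx : s0 x = Asleep := IH v x k hav hxv hk.
  have hxu : x != u by apply/negP => /eqP e; move: hu; rewrite -e hsx.
  rewrite (negbTE hxu).
  case hcx: (is_child r parent u x); last by rewrite /= hsx.
  have /andP [hxr /eqP hpx] := hcx.
  case: k hk hxv => [|k] hk hxv; first by move: hxv; rewrite -hk eqxx.
  move: hk; rewrite iterSr hpx => hk.
  have := IH v u k hav; rewrite eq_sym hvu => /(_ isT hk) e.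
  by move: hu; rewrite e.
Qed.

Definition Lset (s : state T) w : {set T} :=
  [set x | is_leaf r parent x && desc parent w x && ~~ is_dead (s x)].

Lemma sum_disj (I : finType) (P : pred I) (S : I -> {set T}) (S0 : {set T}) :
  (forall i, P i -> S i \subset S0) ->
  (forall i j x, P i -> P j -> x \in S i -> x \in S j -> i = j) ->
  \sum_(i | P i) #|S i| <= #|S0|.
Proof.
move=> hsub hdis.
have e : forall A : {set T}, #|A| = \sum_x (x \in A : nat).
  by move=> A; rewrite -sum1_card big_mkcond.
rewrite (eq_bigr (fun i => \sum_x (x \in S i : nat))); last by move=> i _; rewrite e.
rewrite exchange_big e /=; apply: leq_sum => x _.
case: (pickP (fun i => P i && (x \in S i))) => [i0 /andP [hP hx]|hn].
  rewrite (bigD1 i0) //= hx big1 ?addn0.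
    by rewrite (subsetP (hsub _ hP)).
  move=> j /andP [hPj hj]; case hxj: (x \in S j) => //.
  by rewrite (hdis _ _ _ hPj hP hxj hx) eqxx in hj.
rewrite big1 // => i hi; have := hn i; rewrite hi /=; by case: (x \in S i).
Qed.

Lemma comparable_iter {k1 k2 x v w} : iter k1 parent x = v -> iter k2 parent x = w ->
  (exists j, iter j parent v = w) \/ (exists j, iter j parent w = v).
Proof.
move=> h1 h2; case: (leqP k1 k2) => h.
  by left; exists (k2 - k1); rewrite -h1 -iterD subnK.
by right; exists (k1 - k2); rewrite -h2 -iterD subnK // ltnW.
Qed.


Lemma Lset_sub s w : Lset s w \subset Lset s r.
Proof.
apply/subsetP => x; rewrite !inE => /andP [/andP [-> _] ->].
by rewrite desc_r.
Qed.

Lemma alive_disj s : INV s ->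
  \sum_(w | is_alive (s w)) #|Lset s w| <= #|Lset s r|.
Proof.
move=> hI; apply: sum_disj => [w _|v w x hv hw]; first exact: Lset_sub.
rewrite !inE => /andP [/andP [_ /descP [k1 _ h1]] _] /andP [/andP [_ /descP [k2 _ h2]] _].
case: (v =P w) => // /eqP hvw.
case: (comparable_iter h1 h2) => [[j hj]|[j hj]].
  by move: hv; rewrite (hI w v j hw hvw hj).
by move: hw; rewrite (hI v w j hv _ hj) // eq_sym.
Qed.

Lemma child_disj s u :
  \sum_(w | is_child r parent u w) #|Lset s w| <= #|Lset s u|.
Proof.
apply: sum_disj => [w hw|w1 w2 x h1 h2].
  have /andP [_ /eqP hp] := hw.
  apply/subsetP => x; rewrite !inE => /andP [/andP [-> /descP [k _ hk]] ->].
  by rewrite (@desc_intro _ _ k.+1) // iterS hk hp.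
have /andP [hr1 /eqP hp1] := h1; have /andP [hr2 /eqP hp2] := h2.
rewrite !inE => /andP [/andP [_ /descP [k1 _ e1]] _] /andP [/andP [_ /descP [k2 _ e2]] _].
case: (w1 =P w2) => // /eqP hne.
wlog: w1 w2 hr1 hp1 hr2 hp2 k1 k2 e1 e2 hne h1 h2 / exists j, iter j parent w1 = w2.
  move=> H; case: (comparable_iter e1 e2) => hj; first exact: (H w1 w2 _ _ _ _ k1 k2).
  by apply/esym; apply: (H w2 w1 _ _ _ _ k2 k1) => //; rewrite eq_sym.
case=> [[|j] hj]; first by move: hne; rewrite -hj eqxx.
move: hj; rewrite iterSr hp1 => hj.
have : iter j.+1 parent u = u by rewrite iterS hj hp2.
move/cycle_r => eu.
by move: hr2; rewrite -hj eu iter_r eqxx.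
Qed.

Lemma leaf_Lset s u : is_leaf r parent u -> #|Lset s u| <= 1.
Proof.
move=> hl; rewrite -(cards1 u); apply: subset_leq_card; apply/subsetP => x.
rewrite !inE => /andP [/andP [_ hd] _].
have [k _ hk] := descP hd.
have exP : exists n, iter n parent x == u by exists k; apply/eqP.
case: (ex_minnP exP) => [[|m]] /eqP hm hmin //.
have hy : iter m parent x != u by apply/negP => /hmin; rewrite ltnn.
have hyr : iter m parent x != r.
  apply/negP => /eqP e; move: hm; rewrite iterS e Hpr => eu.
  by rewrite e eu eqxx in hy.
have := forallP hl (iter m parent x).
by rewrite /is_child hyr -iterS hm eqxx.
Qed.

Lemma leaf_kill s u : is_leaf r parent u -> is_alive (s u) ->
  #|Lset s r| = (#|Lset (kill r parent s u) r|).+1.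
Proof.
move=> hl ha.
have hin : u \in Lset s r by rewrite inE hl desc_r /=; case: (s u) ha.
rewrite (cardsD1 u) hin add1n; congr _.+1; apply: eq_card => x.
rewrite !inE /kill; case: (x =P u) => [->|_] /=; first by rewrite andbF.
by rewrite (negbTE (forallP hl x)).
Qed.

Lemma nonleaf_kill s u : INV s -> ~~ is_leaf r parent u -> is_alive (s u) ->
  Lset (kill r parent s u) r = Lset s r.
Proof.
move=> hI hl ha; apply/setP => x.
rewrite !inE /kill; case: (x =P u) => [->|_] /=; first by rewrite (negbTE hl).
case hc: (is_child r parent u x) => //=.
have /andP [_ /eqP hp] := hc.
by rewrite (hI u x 1 ha (child_neq hc)) //= hp.
Qed.

Lemma dist_child u w : is_child r parent u w -> dist r parent u w <= 1.
Proof.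
move=> hc; have /andP [hw /eqP hp] := hc.
apply: (@dist_le u w [:: w]) => //=.
  by rewrite /adj hc orbT.
apply: (@min_iter_lt 1 w u); first by rewrite /= hp.
by case=> // _; exact: child_neq.
Qed.


Local Open Scope ring_scope.

Lemma main_sec (R : realFieldType) s u : reachable r parent s -> is_alive (s u) ->
  potential r parent (kill r parent s u) (herc_update r parent R s u)
    - potential r parent s (eta r parent R s)
  <= - herc_cost r parent R s u.
Proof.
move=> hreach ha; have hI := reach_INV _ hreach.
set s' := kill r parent s u.
set e := eta r parent R s.
set upd := herc_update r parent R s u.
set h : R := (height r parent)%:R.
have hupd_u : upd u = 0 by rewrite /upd /herc_update eqxx.
have E1 : \sum_w upd w * (level r parent w)%:R
    = \sum_(w | w != u) upd w * (level r parent w)%:R.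
  by rewrite (bigD1 u) //= hupd_u mul0r add0r.
have E2 : \sum_w e w * (level r parent w)%:R
    = e u * (level r parent u)%:R + \sum_(w | w != u) e w * (level r parent w)%:R.
  by rewrite (bigD1 u).
have E3 : \sum_(w | w != u) (upd w - e w) * ((level r parent w)%:R + (dist r parent u w)%:R)
   = \sum_(w | w != u) upd w * (level r parent w)%:R
     - \sum_(w | w != u) e w * (level r parent w)%:R
     + \sum_(w | w != u) (upd w - e w) * (dist r parent u w)%:R.
  rewrite -sumrB -big_split /=; apply: eq_bigr => w _; ring.
suff H : 4%:R * h * harmonic R (rank r parent s' r) - 4%:R * h * harmonic R (rank r parent s r)
   - e u * (level r parent u)%:R
   + \sum_(w | w != u) (upd w - e w) * ((level r parent w)%:R + (dist r parent u w)%:R) <= 0.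
  rewrite /potential /herc_cost -/e -/upd -/h E1 E2.
  rewrite E3 in H. lra.
have rk : forall st w, rank r parent st w = #|Lset st w| by [].
have h0 : 0 <= h by rewrite /h ler0n.
have e0 : forall w, 0 <= e w.
  by move=> w; rewrite /e /eta; case: ifP => // _; rewrite divr_ge0 ?ler0n.
have lev0 : forall w, 0 <= ((level r parent w)%:R : R) by move=> w; rewrite ler0n.
have eu : e u = #|Lset s u|%:R / #|Lset s r|%:R by rewrite /e /eta ha.
case hl: (is_leaf r parent u).
-
  have hN := leaf_kill _ _ hl ha.
  rewrite !rk -/s' hN /harmonic big_ord_recr /= -/(harmonic R _).
  set N' := #|Lset s' r|.
  set a := e u.
  have a0 : 0 <= a := e0 u.
  have aN : a <= (N'.+1%:R)^-1.
    rewrite /a eu hN -[X in _ <= X]mul1r ler_wpM2r ?invr_ge0 ?ler0n //.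
    by rewrite lern1 leaf_Lset.
  have sumE : \sum_w e w <= 1.
    have -> : \sum_w e w = (\sum_(w | is_alive (s w)) #|Lset s w|)%:R / #|Lset s r|%:R.
      rewrite natr_sum mulr_suml [RHS]big_mkcond /=; apply: eq_bigr => w _.
      by rewrite /e /eta; case: ifP => _ //; rewrite mul0r.
    case hN0 : (#|Lset s r| == 0)%N.
      by rewrite (eqP hN0) invr0 mulr0.
    rewrite ler_pdivrMr ?ltr0n ?lt0n ?hN0 // mul1r ler_nat.
    exact: alive_disj.
  have sumE' : \sum_(w | w != u) e w <= 1 - a.
    by move: sumE; rewrite (bigD1 u) //= -/a => H; lra.
  set t := (1 - a)^-1.
  have updE : forall w, w != u -> upd w - e w = e w * (t - 1).
    by move=> w hw; rewrite /upd /herc_update (negbTE hw) hl /= -/e -/a /t; ring.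
  have Lb : forall w, ((level r parent w)%:R + (dist r parent u w)%:R : R) <= 4%:R * h.
    move=> w; rewrite -natrD /h -natrM ler_nat.
    have := level_le2h w; have := dist_le2h u w; lia.
  have L0 : forall w, (0 : R) <= (level r parent w)%:R + (dist r parent u w)%:R.
    by move=> w; rewrite -natrD ler0n.
  have tb : (t - 1) * (1 - a) <= a.
    rewrite /t; case: (a =P 1) => [->|/eqP ha1]; first by rewrite subrr invr0 mulr0 ler01.
    have : (1 - a) != 0 by rewrite subr_eq0 eq_sym.
    move=> hne; rewrite mulrBl mulVf //; lra.
  have Sb : \sum_(w | w != u) (upd w - e w) * ((level r parent w)%:R + (dist r parent u w)%:R)
      <= 4%:R * h * a.
    case: (lerP 0 (t - 1)) => ht.
    + apply: (@le_trans _ _ (\sum_(w | w != u) e w * ((t - 1) * (4%:R * h)))).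
        apply: ler_sum => w hw; rewrite updE // -mulrA.
        by apply: ler_wpM2l => //; apply: ler_wpM2l.
      rewrite -mulr_suml mulrA.
      have h4 : 0 <= 4%:R * h by rewrite mulr_ge0 ?ler0n.
      have H1 : (\sum_(w | w != u) e w) * (t - 1) <= a.
        apply: le_trans tb; rewrite [X in _ <= X]mulrC; exact: ler_wpM2r.
      by rewrite [X in _ <= X]mulrC; apply: ler_wpM2r.
    + apply: (@le_trans _ _ 0); last by rewrite mulr_ge0 // mulr_ge0 ?ler0n.
      apply: (@le_trans _ _ (\sum_(w | w != u) (0 : R))); last by rewrite big1_eq.
      apply: ler_sum => w hw; rewrite updE //.
      rewrite -mulrA mulr_ge0_le0 //; rewrite mulr_le0_ge0 //; exact: ltW.
  have hb : h * a <= h * (N'.+1%:R)^-1 by apply: ler_wpM2l.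
  have lu := lev0 u.
  have hlu : 0 <= a * (level r parent u)%:R by rewrite mulr_ge0.
  move: Sb hb hlu; rewrite -/a; set X := \sum_(_ | _) _.
  move=> Sb hb hlu; rewrite mulrDr; exact: fin_leaf.
-
  have hnl : ~~ is_leaf r parent u by rewrite hl.
  rewrite !rk -/s' (nonleaf_kill _ _ hI hnl ha) subrr.
  set lu := ((level r parent u)%:R : R).
  pose F w : R := if is_child r parent u w
                  then #|Lset s w|%:R / #|Lset s u|%:R * e u * lu else 0.
  have F0 : forall w, 0 <= F w.
    move=> w; rewrite /F; case: ifP => // _.
    by rewrite !mulr_ge0 ?invr_ge0 ?ler0n ?e0.
  have S1 : \sum_(w | w != u) (upd w - e w) *
        ((level r parent w)%:R + (dist r parent u w)%:R) <= \sum_(w | w != u) F w.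
    apply: ler_sum => w hw.
    rewrite /upd /herc_update (negbTE hw) hnl /F -/e.
    case hc: (is_child r parent u w).
      have /andP [_ /eqP hpw] := hc.
      have hsw : s w = Asleep by apply: (hI u w 1 ha (child_neq hc)); rewrite /= hpw.
      have -> : e w = 0 by rewrite /e /eta hsw.
      rewrite subr0 -/lu.
      have hlw : ((level r parent w)%:R + (dist r parent u w)%:R : R) <= lu.
        rewrite -natrD ler_nat; have := level_child hc; have := dist_child _ _ hc; lia.
      by apply: ler_wpM2l => //; rewrite !mulr_ge0 ?invr_ge0 ?ler0n ?e0.
    by rewrite subrr mul0r.
  have S2 : \sum_(w | w != u) F w <= \sum_w F w.
    by rewrite [X in _ <= X](bigD1 u) //=; apply: ler_wpDl.
  have S3 : \sum_w F w = (\sum_(w | is_child r parent u w) #|Lset s w|)%:R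
                         / #|Lset s u|%:R * (e u * lu).
    rewrite natr_sum !mulr_suml [RHS]big_mkcond /=; apply: eq_bigr => w _.
    by rewrite /F; case: ifP => _; rewrite ?mul0r // !mulrA.
  have S4 : (\sum_(w | is_child r parent u w) #|Lset s w|)%:R / #|Lset s u|%:R <= (1 : R).
    case hN0 : (#|Lset s u| == 0)%N.
      by rewrite (eqP hN0) invr0 mulr0.
    rewrite ler_pdivrMr ?ltr0n ?lt0n ?hN0 // mul1r ler_nat.
    exact: child_disj.
  have S5 : 0 <= e u * lu by rewrite mulr_ge0 ?e0 // /lu ler0n.
  have S6 : \sum_w F w <= e u * lu.
    by rewrite S3 -[X in _ <= X]mul1r; apply: ler_wpM2r.
  move: S1 S2 S6; set X := \sum_(_ | _) _ * _; set Y := \sum_(_ | _) F _.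
  move=> S1 S2 S6.
  have : X <= e u * lu by apply: le_trans S1 (le_trans S2 S6).
  clearbody X; move=> HX; by rewrite sub0r addrC subr_le0.
Qed.

End Basics.

Local Open Scope ring_scope.

Theorem lemma3 (R : realFieldType) (T : finType) (r : T) (parent : T -> T)
    (s : state T) (u : T) :
  is_rooted_tree r parent ->
  reachable r parent s ->
  ~~ game_ended s ->
  is_alive (s u) ->
  potential r parent (kill r parent s u) (herc_update r parent R s u)
    - potential r parent s (eta r parent R s)
  <= - herc_cost r parent R s u.
Proof.
move=> [Hpr Hex] hr _ ha.
exact: (@main_sec T r parent Hpr Hex R s u hr ha).
Qed.
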